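(* Let $h(\alpha_1,\ldots,\alpha_r)$ be a rational function. (1) There exists a set $K\subset\mathbb{Z}^r$ contained in a finite union of hyperplanes such that if $h$ is N-small then $\lim_{\xi\to\infty} h(\xi^s)$ is finite for all $s\in\mathbb{Z}^r\setminus K$. (2) If $K\subset \mathbb{Z}^r$ is contained in a finite union of hyperplanes and $\lim_{\xi\to\infty} h(\xi^s)$ is finite for all $s\in\mathbb{Z}^r\setminus K$, then $h$ is N-small.
   Context: For $f\in \mathbb{Z}[\alpha_1^{\pm 1},\ldots,\alpha_r^{\pm 1}]$ the Newton polytope $\mathcal N(f)\subset\mathbb{R}^r$ is the convex hull of the exponent vectors of the monomials of $f$ with nonzero coefficient. A rational function $h=f_1/f_2$ with $f_1,f_2$ Laurent polynomials is N-small if $\mathcal N(f_1)\subset\mathcal N(f_2)$ (independent of the presentation). For $s\in\mathbb{Z}^r$, $h(\xi^s)$ denotes the one-variable rational function obtained by substituting $\alpha_i=\xi^{s_i}$. *)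

(* Defs.v *)
From HB Require Import structures.
From mathcomp Require Import all_boot all_order all_algebra.
From mathcomp Require Import finmap.
From mathcomp Require Import reals.
Set Implicit Arguments. Unset Strict Implicit. Unset Printing Implicit Defensive.
Import Order.TTheory GRing.Theory Num.Theory.
Local Open Scope ring_scope.
Local Open Scope fset_scope.

(* A Laurent polynomial in Z[a_1^{+-1},...,a_r^{+-1}]: a finitely supported
   map from exponent vectors e in Z^r to integer coefficients (default 0).
   Its monomials with nonzero coefficient are exactly those in [finsupp f]. *)
Definition laurent (r : nat) := {fsfun 'rV[int]_r -> int with 0%R}.

Section Defs.
Variables (R : realType) (r : nat).

Definition rvR (e : 'rV[int]_r) : 'rV[R]_r := map_mx (fun z : int => z%:~R) e.

Definition newton (f : laurent r) : 'rV[R]_r -> Prop := fun x =>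
  exists w : 'rV[int]_r -> R,
    (forall e, 0 <= w e) /\
    \sum_(e <- finsupp f) w e = 1 /\
    x = \sum_(e <- finsupp f) w e *: rvR e.

(* h = f1 / f2 is N-small iff N(f1) is contained in N(f2). *)
Definition Nsmall (f1 f2 : laurent r) : Prop :=
  forall x, newton f1 x -> newton f2 x.

Definition leval (f : laurent r) (x : 'rV[R]_r) : R :=
  \sum_(e <- finsupp f) (f e)%:~R * \prod_(i < r) (x 0 i) ^ (e 0 i).

Definition xipow (s : 'rV[int]_r) (xi : R) : 'rV[R]_r :=
  \row_i (xi ^ (s 0 i)).

(* "lim_{xi -> oo} h(xi^s) is finite", for h = f1/f2: the one-variable
   rational function h(xi^s) is defined (its denominator f2(xi^s) does not
   vanish for large real xi) and has a finite limit as xi -> +oo. *)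
Definition lim_finite (f1 f2 : laurent r) (s : 'rV[int]_r) : Prop :=
  (exists M : R, forall xi : R, M < xi -> leval f2 (xipow s xi) != 0) /\
  exists L : R, forall eps : R, 0 < eps ->
    exists M : R, forall xi : R, M < xi ->
      `| leval f1 (xipow s xi) / leval f2 (xipow s xi) - L | < eps.

Definition in_finite_hyperplanes (K : 'rV[int]_r -> Prop) : Prop :=
  exists A : seq 'rV[R]_r,
    (forall a, a \in A -> a != 0) /\
    forall s, K s -> exists2 a, a \in A & \sum_(i < r) a 0 i * (rvR s) 0 i = 0.

End Defs.

(* Main.v *)
Require Import Defs.
From HB Require Import structures.
From mathcomp Require Import all_boot all_order all_algebra.
From mathcomp Require Import finmap.
From mathcomp Require Import reals.
From mathcomp Require Import ring lra zify.
Set Implicit Arguments. Unset Strict Implicit. Unset Printing Implicit Defensive.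
Import Order.TTheory GRing.Theory Num.Theory.
Local Open Scope ring_scope.

Section Dot.
Variables (F : realFieldType) (n : nat).
Implicit Types (a b c : 'rV[F]_n).

Definition dot a b : F := \sum_i a 0 i * b 0 i.

Lemma dotC a b : dot a b = dot b a.
Proof. by apply: eq_bigr => i _; rewrite mulrC. Qed.

Lemma dotDr a b c : dot a (b + c) = dot a b + dot a c.
Proof. by rewrite /dot -big_split; apply: eq_bigr => i _; rewrite mxE mulrDr. Qed.

Lemma dotZr a k b : dot a (k *: b) = k * dot a b.
Proof. by rewrite /dot mulr_sumr; apply: eq_bigr => i _; rewrite mxE mulrCA. Qed.

Lemma dotNr a b : dot a (- b) = - dot a b.
Proof. by rewrite -scaleN1r dotZr mulN1r. Qed.

Lemma dotBr a b c : dot a (b - c) = dot a b - dot a c.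
Proof. by rewrite dotDr dotNr. Qed.

Lemma dotDl a b c : dot (a + b) c = dot a c + dot b c.
Proof. by rewrite dotC dotDr !(dotC c). Qed.

Lemma dotZl k a b : dot (k *: a) b = k * dot a b.
Proof. by rewrite dotC dotZr dotC. Qed.

Lemma dotBl a b c : dot (a - b) c = dot a c - dot b c.
Proof. by rewrite dotC dotBr !(dotC c). Qed.

Lemma dot0r a : dot a 0 = 0.
Proof. by rewrite /dot big1 // => i _; rewrite mxE mulr0. Qed.

Lemma dot_sumr (T : Type) (s : seq T) (P : pred T) a (G : T -> 'rV[F]_n) :
  dot a (\sum_(x <- s | P x) G x) = \sum_(x <- s | P x) dot a (G x).
Proof.
elim: s => [|x s IH]; first by rewrite !big_nil dot0r.
by rewrite !big_cons; case: (P x) => //; rewrite dotDr IH.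
Qed.

Lemma dot_ge0 a : 0 <= dot a a.
Proof. by apply: sumr_ge0 => i _; rewrite -expr2 sqr_ge0. Qed.

Lemma dot_gt0 a : a != 0 -> 0 < dot a a.
Proof.
move=> a0; rewrite lt_def dot_ge0 andbT; apply: contra a0 => /eqP H.
have H2 : forall j, a 0 j ^+ 2 = 0.
  move=> j; apply: (@psumr_eq0P _ _ xpredT (fun i => a 0 i ^+ 2)) => //.
    by move=> i _; exact: sqr_ge0.
apply/eqP/matrixP => i j; rewrite (ord1 i) mxE.
by have /eqP := H2 j; rewrite sqrf_eq0 => /eqP.
Qed.

End Dot.

Lemma term_le_sum (F : realDomainType) (T : eqType) (s : seq T) (G : T -> F) x :
  uniq s -> x \in s -> (forall y, 0 <= G y) -> G x <= \sum_(y <- s) G y.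
Proof.
move=> us xs G0; rewrite (bigD1_seq x) //= lerDl; exact: sumr_ge0.
Qed.

Lemma ler_sum_seq (F : numDomainType) (T : eqType) (s : seq T) (G H : T -> F) :
  (forall x, x \in s -> G x <= H x) -> \sum_(x <- s) G x <= \sum_(x <- s) H x.
Proof. by move=> h; rewrite big_seq [X in _ <= X]big_seq; apply: ler_sum. Qed.

Lemma gordan (F : realFieldType) n (T : eqType) (s : seq T) (u : T -> 'rV[F]_n) :
  uniq s ->
  (exists lam : T -> F, (forall x, 0 <= lam x) /\ 0 < \sum_(x <- s) lam x /\
      \sum_(x <- s) lam x *: u x = 0) \/
  (exists a, forall x, x \in s -> dot a (u x) <= -1).
Proof.
elim: s u => [|x0 s IH] u /=.
  by move=> _; right; exists 0 => x; rewrite in_nil.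
move=> /andP [x0ns us].
have extend0 (lam : T -> F) : \sum_(x <- s) (if x == x0 then 0 else lam x) =
    \sum_(x <- s) lam x.
  apply: eq_big_seq => x xs; case: eqP => // E; by move: x0ns; rewrite -E xs.
have extend0v (lam : T -> F) (G : T -> 'rV[F]_n) :
    \sum_(x <- s) (if x == x0 then 0 else lam x) *: G x = \sum_(x <- s) lam x *: G x.
  apply: eq_big_seq => x xs; case: eqP => // E; by move: x0ns; rewrite -E xs.
case: (IH u us) => [[lam [lam0 [lampos lameq]]] | [a Ha]].
  left; exists (fun x => if x == x0 then 0 else lam x); split.
    by move=> x; case: eqP.
  rewrite !big_cons eqxx add0r scale0r add0r extend0 extend0v; by split.
set c := dot a (u x0).
case: (ltrP c 0) => hc.
  right; exists ((1 - c^-1) *: a) => x; rewrite in_cons => /orP [/eqP ->|xs].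
    rewrite dotZl -/c mulrBl mul1r mulVf ?lt_eqF //; lra.
  rewrite dotZl; have := Ha x xs; have : 0 < - c^-1 by rewrite oppr_gt0 invr_lt0.
  nra.
pose w x := c *: u x - dot a (u x) *: u x0.
case: (IH w us) => [[mu [mu0 [mupos mueq]]] | [b Hb]].
  left; exists (fun x => if x == x0 then - \sum_(y <- s) mu y * dot a (u y)
                         else c * mu x).
  have key : \sum_(y <- s) mu y <= - \sum_(y <- s) mu y * dot a (u y).
    rewrite -sumrN; apply: ler_sum_seq => y ys; have := Ha y ys; have := mu0 y; nra.
  have cmu : 0 <= \sum_(x <- s) (if x == x0 then - \sum_(y <- s) mu y * dot a (u y)
                         else c * mu x).
    rewrite (eq_big_seq (fun x => c * mu x)); first by rewrite -mulr_sumr; apply: mulr_ge0 => //; apply: sumr_ge0.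
    move=> x xs; case: eqP => // E; by move: x0ns; rewrite -E xs.
  split; [|split].
  - move=> x; case: eqP => _; last exact: mulr_ge0.
    apply: le_trans key; exact: sumr_ge0.
  - rewrite big_cons eqxx; apply: (lt_le_trans mupos); apply: (le_trans key).
    by rewrite lerDl.
  - rewrite big_cons eqxx; rewrite -[RHS]mueq.
    rewrite (eq_big_seq (fun x => (c * mu x) *: u x)); last first.
      move=> x xs; case: eqP => // E; by move: x0ns; rewrite -E xs.
    rewrite [RHS](eq_bigr (fun x => (mu x * c) *: u x - (mu x * dot a (u x)) *: u x0)); last first.
      by move=> x _; rewrite /w scalerBr !scalerA.
    rewrite sumrB -scaler_suml scaleNr addrC; congr (_ - _).
    by apply: eq_bigr => x _; rewrite mulrC.
have [u00|u0n0] := eqVneq (u x0) 0.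
  left; exists (fun x => if x == x0 then 1 else 0); split.
    by move=> x; case: eqP.
  rewrite !big_cons eqxx u00 scaler0 add0r.
  rewrite (eq_big_seq (fun x => 0)); last first.
    move=> x xs; case: eqP => // E; by move: x0ns; rewrite -E xs.
  rewrite big1 // addr0; split => //.
  rewrite big1_seq // => x /andP [_ xs]; case: eqP => [E|_]; last by rewrite scale0r.
  by move: x0ns; rewrite -E xs.
pose q := dot (u x0) (u x0).
have q0 : 0 < q by exact: dot_gt0.
pose be := dot b (u x0).
pose a1 := c *: b - be *: a.
have Ha1 x : x \in s -> dot a1 (u x) <= -1.
  move=> xs; have := Hb x xs; rewrite /w dotBr !dotZr /a1 dotBl !dotZl -/be.
  by rewrite (mulrC be).
have Ha10 : dot a1 (u x0) = 0.
  by rewrite /a1 dotBl !dotZl -/be -/c mulrC subrr.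
pose S := \sum_(y <- s) `|dot (u x0) (u y)|.
have S0 : 0 <= S by apply: sumr_ge0.
pose t := (2 * (1 + S))^-1.
have t0 : 0 < t by rewrite invr_gt0; lra.
have tS : t * S <= 1/2.
  rewrite /t mulrC ler_pdivrMr; last lra.
  lra.
pose a2 := a1 - t *: u x0.
have Ha2 x : x \in s -> dot a2 (u x) <= - (1/2).
  move=> xs; rewrite /a2 dotBl dotZl.
  have h1 := Ha1 x xs.
  have h2 : `|dot (u x0) (u x)| <= S.
    by apply: (@term_le_sum _ _ s (fun y => `|dot (u x0) (u y)|) x us xs) => y; exact: normr_ge0.
  have h3 : t * dot (u x0) (u x) >= - (t * S).
    rewrite -mulrN; apply: ler_wpM2l; first exact: ltW.
    rewrite lerNl; apply: le_trans h2; rewrite -normrN; exact: ler_norm.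
  lra.
have Ha20 : dot a2 (u x0) = - (t * q).
  by rewrite /a2 dotBl dotZl Ha10 sub0r.
have tq0 : 0 < t * q by apply: mulr_gt0.
pose k := 2 + (t * q)^-1.
have k0 : 0 < (t * q)^-1 by rewrite invr_gt0.
right; exists (k *: a2) => x; rewrite in_cons => /orP [/eqP ->|xs].
  rewrite dotZl Ha20 /k mulrN mulrDl mulVf ?gt_eqF //; nra.
rewrite dotZl; have := Ha2 x xs; rewrite /k; nra.
Qed.

Lemma separate (F : realFieldType) n (T : eqType) (s : seq T) (p : T -> 'rV[F]_n)
    (x : 'rV[F]_n) : uniq s ->
  (exists w : T -> F, (forall y, 0 <= w y) /\ \sum_(y <- s) w y = 1 /\
      x = \sum_(y <- s) w y *: p y) \/
  (exists a, forall y, y \in s -> dot a (p y) + 1 <= dot a x).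
Proof.
move=> us; case: (gordan (fun y => p y - x) us) => [[lam [l0 [lpos leq]]]|[a Ha]].
  left; set L := \sum_(y <- s) lam y.
  exists (fun y => lam y / L); split; [|split].
  - by move=> y; apply: divr_ge0 => //; apply: ltW.
  - by rewrite -mulr_suml mulfV // gt_eqF.
  - have : \sum_(y <- s) lam y *: p y = L *: x.
      move: leq; rewrite (eq_bigr (fun y => lam y *: p y - lam y *: x)); last first.
        by move=> y _; rewrite scalerBr.
      by rewrite sumrB -scaler_suml => /eqP; rewrite subr_eq0 => /eqP.
    move=> E; apply: (@scalerI _ _ L); first by rewrite gt_eqF.
    rewrite -E scaler_sumr; apply: eq_bigr => y _; rewrite scalerA.
    by rewrite mulrCA mulfV ?gt_eqF // mulr1.
right; exists a => y ys; have := Ha y ys; rewrite dotBr; lra.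
Qed.

Definition doti r (a b : 'rV[int]_r) : int := \sum_i a 0 i * b 0 i.

Section Asym.
Variables (R : realType) (r : nat).

Lemma prod_exprz (xi : R) (I : Type) (s : seq I) (k : I -> int) : xi != 0 ->
  \prod_(i <- s) xi ^ (k i) = xi ^ (\sum_(i <- s) k i).
Proof.
move=> x0; apply: esym.
apply: (big_morph (fun k => xi ^ k)) => [a b|]; first exact: expfzDr.
by rewrite expr0z.
Qed.

Lemma leval_xipow (f : laurent r) s (xi : R) : 0 < xi ->
  leval f (xipow s xi) = \sum_(e <- finsupp f) (f e)%:~R * xi ^ (doti s e).
Proof.
move=> xi0; apply: eq_bigr => e _; congr (_ * _).
rewrite -prod_exprz ?gt_eqF //; apply: eq_bigr => i _.
by rewrite mxE exprz_exp.
Qed.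

Lemma leval_bound (f : laurent r) s (N : int) :
  (forall e, e \in finsupp f -> doti s e <= N) ->
  forall xi : R, 1 <= xi ->
  xi * `| leval f (xipow s xi) / xi ^ N -
          \sum_(e <- finsupp f | doti s e == N) (f e)%:~R |
   <= \sum_(e <- finsupp f) `|(f e)%:~R : R|.
Proof.
move=> HN xi xi1.
have xi0 : 0 < xi by lra.
rewrite leval_xipow // mulr_suml.
rewrite (bigID (fun e => doti s e == N)) /=.
rewrite [X in X + _ - _](eq_bigr (fun e => (f e)%:~R)); last first.
  move=> e /eqP ->; rewrite mulfK //; apply: expfz_neq0; lra.
rewrite addrC addKr.
apply: (@le_trans _ _ (xi * \sum_(e <- finsupp f | doti s e != N) `|(f e)%:~R : R| * xi ^ (-1))).
  rewrite ler_pM2l //.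
  rewrite big_seq_cond [X in _ <= X]big_seq_cond.
  apply: (le_trans (ler_norm_sum _ _ _)); apply: ler_sum => e /andP [es eN].
  rewrite !normrM -mulrA; apply: (ler_wpM2l (normr_ge0 _)).
  rewrite -normrM invr_expz -expfzDr ?gt_eqF //.
  rewrite ger0_norm; last by apply: exprz_ge0; lra.
  apply: ler_weXz2l => //; have := HN e es; move: eN; lia.
rewrite -mulr_suml mulrCA exprN1 mulfV ?gt_eqF // mulr1.
rewrite [X in _ <= X](bigID (fun e => doti s e != N)) /= lerDl.
by apply: sumr_ge0.
Qed.

End Asym.

Section Lim.
Variable R : realFieldType.

Lemma lim_ratio (G1 G2 : R -> R) (d1 c2 C1 C2 : R) : c2 != 0 ->
  (forall xi, 1 <= xi -> xi * `|G1 xi - d1| <= C1) ->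
  (forall xi, 1 <= xi -> xi * `|G2 xi - c2| <= C2) ->
  (exists M : R, forall xi, M < xi -> G2 xi != 0) /\
  (exists L : R, forall eps : R, 0 < eps -> exists M : R, forall xi, M < xi ->
      `|G1 xi / G2 xi - L| < eps).
Proof.
move=> c20 H1 H2.
have c0 : 0 < `|c2| by rewrite normr_gt0.
have C20 : 0 <= C2 by have := H2 1 (lexx _); rewrite mul1r; apply: le_trans.
have C10 : 0 <= C1 by have := H1 1 (lexx _); rewrite mul1r; apply: le_trans.
set M0 := 1 + 2 * C2 / `|c2|.
have M01 : 1 <= M0 by rewrite /M0 lerDl; apply: divr_ge0 => //; lra.
have big2 xi : M0 < xi -> `|c2| / 2 <= `|G2 xi|.
  move=> hxi; have xi1 : 1 <= xi by lra.
  have h := H2 xi xi1.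
  have h' : 2 * C2 < `|c2| * xi.
    have : 2 * C2 / `|c2| < xi by rewrite /M0 in hxi; lra.
    rewrite ltr_pdivrMr //; lra.
  have tri : `|c2| - `|G2 xi| <= `|G2 xi - c2|.
    by rewrite distrC; apply: lerB_dist.
  have : xi * (`|c2| - `|G2 xi|) <= C2.
    apply: le_trans h; apply: ler_wpM2l => //; lra.
  nra.
split.
  exists M0 => xi hxi; rewrite -normr_gt0; have := big2 xi hxi; lra.
exists (d1 / c2) => eps eps0.
set D := `|c2| * C1 + `|d1| * C2.
have D0 : 0 <= D by rewrite /D; apply: addr_ge0; apply: mulr_ge0.
exists (M0 + 2 * D / (`|c2| ^+ 2 * eps)) => xi hxi.
have hD : 0 <= 2 * D / (`|c2| ^+ 2 * eps).
  apply: divr_ge0; first lra; apply: mulr_ge0 => //; [exact: sqr_ge0|lra].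
have hM0 : M0 < xi by lra.
have xi1 : 1 <= xi by lra.
have B := big2 xi hM0.
have G2n0 : G2 xi != 0 by rewrite -normr_gt0; lra.
have E : G1 xi / G2 xi - d1 / c2 =
    ((G1 xi - d1) * c2 - d1 * (G2 xi - c2)) / (G2 xi * c2).
  by field; apply/andP.
rewrite E normrM normfV normrM ltr_pdivrMr; last by apply: mulr_gt0; lra.
apply: (le_lt_trans (ler_normB _ _)); rewrite !normrM.
set n1 := `|G1 xi - d1|; set n2 := `|G2 xi - c2|; set Bn := `|G2 xi|.
set c := `|c2|; set dd := `|d1|.
have h1 : xi * n1 <= C1 by exact: H1.
have h2 : xi * n2 <= C2 by exact: H2.
have dd0 : 0 <= dd by exact: normr_ge0.
have hx : 2 * D < xi * (c ^+ 2 * eps).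
  have : 2 * D / (c ^+ 2 * eps) < xi by lra.
  rewrite ltr_pdivrMr; last by apply: mulr_gt0 => //; apply: exprn_gt0.
  lra.
have k1 : xi * (n1 * c) <= C1 * c by rewrite mulrA; apply: (ler_wpM2r (normr_ge0 _)); exact: h1.
have k2 : xi * (dd * n2) <= dd * C2.
  by rewrite mulrCA; apply: (ler_wpM2l dd0).
have ec0 : 0 <= eps * c := mulr_ge0 (ltW eps0) (ltW c0).
have xi0 : 0 <= xi by lra.
have k3a := ler_wpM2l ec0 B.
have k3 := ler_wpM2l xi0 k3a; rewrite -/c -/Bn in k3.
have k4 : xi * (eps * c * (c / 2)) = xi * (c ^+ 2 * eps) / 2.
  by rewrite expr2; field.
rewrite /D -/c -/dd in hx.
have : xi * (n1 * c + dd * n2) < xi * (eps * (Bn * c)).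
  rewrite mulrDr; lra.
rewrite ltr_pM2l //; lra.
Qed.

Lemma blowup (G1 G2 : R -> R) (c1 C1 C2 : R) : c1 != 0 ->
  (forall xi, 1 <= xi -> xi * `|G1 xi - c1| <= C1) ->
  (forall xi, 1 <= xi -> xi * `|G2 xi| <= C2) ->
  (exists M : R, forall xi, M < xi -> G2 xi != 0) ->
  (exists L : R, forall eps : R, 0 < eps -> exists M : R, forall xi, M < xi ->
      `|G1 xi / G2 xi - L| < eps) -> False.
Proof.
move=> c10 H1 H2 [M0 HM0] [L HL].
have [M1 HM1] := HL 1 ltr01.
have c0 : 0 < `|c1| by rewrite normr_gt0.
have C20 : 0 <= C2 by have := H2 1 (lexx _); rewrite mul1r; apply: le_trans.
have C10 : 0 <= C1 by have := H1 1 (lexx _); rewrite mul1r; apply: le_trans.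
have L0 : 0 <= `|L| by exact: normr_ge0.
have q1 : 0 <= 2 * C1 / `|c1| by apply: divr_ge0 => //; lra.
have q2 : 0 <= 2 * ((`|L| + 1) * C2) / `|c1|.
  apply: divr_ge0 => //; apply: mulr_ge0; first lra; apply: mulr_ge0 => //; lra.
have [xi xidef] : exists xi, xi = 2 + `|M0| + `|M1| + 2 * C1 / `|c1| + 2 * ((`|L| + 1) * C2) / `|c1|.
  by eexists.
have n0 := normr_ge0 M0; have n1 := normr_ge0 M1.
have m0 : M0 < xi by have := ler_norm M0; lra.
have m1 : M1 < xi by have := ler_norm M1; lra.
have xi1 : 1 <= xi by have := normr_ge0 M0; have := normr_ge0 M1; lra.
have g2 := HM0 xi m0.
have B0 : 0 < `|G2 xi| by rewrite normr_gt0.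
have h := HM1 xi m1.
have hA : `|G1 xi| < (`|L| + 1) * `|G2 xi|.
  have : `|G1 xi / G2 xi| < `|L| + 1.
    have t := ler_normD (G1 xi / G2 xi - L) L; rewrite subrK in t; lra.
  by rewrite normrM normfV ltr_pdivrMr.
have hB := H2 xi xi1.
have hG1 : `|c1| - `|G1 xi| <= `|G1 xi - c1|.
  by rewrite distrC; apply: lerB_dist.
have hC := H1 xi xi1.
have e1 : 2 * C1 <= `|c1| * xi.
  have : 2 * C1 / `|c1| <= xi by have := normr_ge0 M0; have := normr_ge0 M1; lra.
  rewrite ler_pdivrMr //; lra.
have e2 : 2 * ((`|L| + 1) * C2) <= `|c1| * xi.
  have : 2 * ((`|L| + 1) * C2) / `|c1| <= xi.
    by have := normr_ge0 M0; have := normr_ge0 M1; lra.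
  rewrite ler_pdivrMr //; lra.
have A1 : `|c1| / 2 <= `|G1 xi|.
  have : xi * (`|c1| - `|G1 xi|) <= C1.
    apply: le_trans hC; apply: ler_wpM2l => //; lra.
  nra.
have : xi * `|G1 xi| < xi * ((`|L| + 1) * `|G2 xi|) by rewrite ltr_pM2l //; lra.
have : xi * ((`|L| + 1) * `|G2 xi|) <= (`|L| + 1) * C2.
  by rewrite mulrCA; apply: ler_wpM2l => //; lra.
have : xi * (`|c1| / 2) <= xi * `|G1 xi| by apply: ler_wpM2l => //; lra.
lra.
Qed.

End Lim.

Lemma exists_nonroot (F : numFieldType) (p : {poly F}) (T0 : nat) : p != 0 ->
  exists t : nat, (T0 <= t)%N /\ p.[t%:R] != 0.
Proof.
move=> p0.
case: (boolP (has (fun k => p.[(T0 + k)%:R] != 0) (iota 0 (size p)))).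
  by move=> /hasP [k _ hk]; exists (T0 + k)%N; split => //; rewrite leq_addr.
move=> hn; exfalso.
pose rs := [seq ((T0 + k)%:R : F) | k <- iota 0 (size p)].
have hr : all (root p) rs.
  apply/allP => x /mapP [k kin ->]; rewrite /root.
  by move/hasPn: hn => /(_ k kin); rewrite negbK.
have hu : uniq rs.
  rewrite map_inj_uniq ?iota_uniq // => a b /eqP; rewrite eqr_nat => /eqP; lia.
by have := max_poly_roots p0 hr hu; rewrite size_map size_iota ltnn.
Qed.

Section IntPt.
Variables (R : realType) (r : nat).

Definition sT (z : 'rV[int]_r) (t : nat) : 'rV[int]_r :=
  \row_i ((t%:Z) ^+ r * z 0 i + (t%:Z) ^+ i).

Lemma doti_sT z t d : doti (sT z t) d =
  (t%:Z) ^+ r * doti z d + \sum_(i < r) (t%:Z) ^+ i * d 0 i.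
Proof.
rewrite /doti mulr_sumr -big_split; apply: eq_bigr => i _.
by rewrite mxE mulrDl mulrA.
Qed.

Lemma sT_pos z d (t : nat) : 0 < doti z d ->
  \sum_(i < r) `|d 0 i| < t%:Z -> 0 < doti (sT z t) d.
Proof.
move=> zd tA.
have A0 : 0 <= \sum_(i < r) `|d 0 i| by apply: sumr_ge0.
have t1 : 1 <= t%:Z by lia.
set A := \sum_(i < r) `|d 0 i| in A0 tA.
set S := \sum_(i < r) (t%:Z) ^+ i * d 0 i.
have hS : `|t%:Z * S| <= (t%:Z) ^+ r * A.
  rewrite /S mulr_sumr /A mulr_sumr.
  apply: (le_trans (ler_norm_sum _ _ _)); apply: ler_sum => i _.
  rewrite mulrA normrM -exprS; apply: ler_wpM2r => //.
  rewrite ger0_norm; last by apply: exprn_ge0; lia.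
  by apply: ler_weXn2l.
have tr0 : 0 < (t%:Z) ^+ r by apply: exprn_gt0; lia.
have : 0 < t%:Z * doti (sT z t) d.
  have -> : t%:Z * doti (sT z t) d = (t%:Z) ^+ r * (t%:Z * doti z d) + t%:Z * S.
    by rewrite doti_sT /S; ring.
  have h1 : - ((t%:Z) ^+ r * A) <= t%:Z * S.
    by rewrite lerNl; apply: le_trans hS; rewrite -normrN ler_norm.
  have h2 : (t%:Z) ^+ r * A < (t%:Z) ^+ r * (t%:Z * doti z d).
    rewrite ltr_pM2l //; nia.
  lra.
rewrite pmulr_rgt0 //; lia.
Qed.

Definition Ph (z : 'rV[int]_r) (h : 'rV[R]_r) : {poly R} :=
  dot h (rvR R z) *: 'X^r + \sum_(i < r) h 0 i *: 'X^i.

Lemma Ph_eval z h (t : nat) : dot h (rvR R (sT z t)) = (Ph z h).[t%:R].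
Proof.
rewrite /Ph hornerD hornerZ hornerXn horner_sum /dot mulr_suml -big_split /=.
apply: eq_bigr => i _; rewrite hornerZ hornerXn !mxE.
rewrite intrD intrM !rmorphXn /=; ring.
Qed.

Lemma Ph_neq0 z h : h != 0 -> Ph z h != 0.
Proof.
move=> h0; have [i hi] : exists i, h 0 i != 0.
  apply/existsP; move: h0; apply: contraR; rewrite negb_exists => /forallP H.
  apply/eqP/matrixP => a b; rewrite (ord1 a) mxE; exact/eqP/negPn/H.
apply: contra hi => /eqP P0.
have := congr1 (fun p : {poly R} => p`_i) P0; rewrite coef0 /Ph coefD coefZ coefXn.
rewrite ltn_eqF // mulr0n mulr0 add0r coef_sum.
rewrite (bigD1 i) //= coefZ coefXn eqxx mulr1 big1 ?addr0 => [->//|j ji].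
rewrite coefZ coefXn; have /negbTE -> : (i : nat) != j.
  by apply: contra ji => /eqP E; apply/eqP/val_inj.
by rewrite mulr0n mulr0.
Qed.

Lemma find_s (z : 'rV[int]_r) (D : seq 'rV[int]_r) (H : seq 'rV[R]_r) :
  (forall d, d \in D -> 0 < doti z d) -> (forall h, h \in H -> h != 0) ->
  exists s, (forall d, d \in D -> 0 < doti s d) /\
            (forall h, h \in H -> dot h (rvR R s) != 0).
Proof.
move=> HD HH.
set B := \sum_(d <- D) \sum_(i < r) `|d 0 i|.
have Q0 : \prod_(h <- H) Ph z h != 0.
  rewrite prodf_seq_neq0; apply/allP => h hH /=; exact: Ph_neq0 (HH h hH).
have [t [tT Qt]] := exists_nonroot `|B|%N.+1 Q0.
exists (sT z t); split.
  move=> d dD; apply: sT_pos; first exact: HD.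
  have : \sum_(i < r) `|d 0 i| <= B.
    rewrite /B (big_rem d dD) /= lerDl; apply: sumr_ge0 => e _; exact: sumr_ge0.
  have : B <= `|B|%N%:Z by rewrite abszE; exact: ler_norm.
  move: tT; set k := `|B|%N => h1 h2 h3; apply: (le_lt_trans h3); apply: (le_lt_trans h2); by rewrite ltz_nat.
move=> h hH; rewrite Ph_eval.
move: Qt; rewrite horner_prod prodf_seq_neq0 => /allP /(_ h hH) //.
Qed.

End IntPt.

Section Main.
Variables (R : realType) (r : nat).

Lemma intr_sum (I : Type) (s : seq I) (F : I -> int) :
  (\sum_(i <- s) F i)%:~R = \sum_(i <- s) (F i)%:~R :> R.
Proof.
apply: (big_morph (fun x : int => x%:~R : R)) => [a b|]; first exact: intrD.
by rewrite mulr0z.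
Qed.

Lemma dot_rvR (a b : 'rV[int]_r) : dot (rvR R a) (rvR R b) = (doti a b)%:~R.
Proof. by rewrite intr_sum; apply: eq_bigr => i _; rewrite !mxE intrM. Qed.

Lemma rvRB (a b : 'rV[int]_r) : rvR R (a - b) = rvR R a - rvR R b.
Proof. by apply/matrixP => i j; rewrite !mxE intrB. Qed.

Lemma rvR_eq0 (a : 'rV[int]_r) : (rvR R a == 0) = (a == 0).
Proof.
apply/eqP/eqP => [H|->]; last by apply/matrixP => i j; rewrite !mxE.
apply/matrixP => i j; have := congr1 (fun m : 'rV[R]_r => m i j) H; rewrite !mxE => /eqP.
by rewrite intr_eq0 => /eqP.
Qed.

Lemma dotiC (a b : 'rV[int]_r) : doti a b = doti b a.
Proof. by apply: eq_bigr => i _; rewrite mulrC. Qed.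

Lemma dotiBr (a b c : 'rV[int]_r) : doti a (b - c) = doti a b - doti a c.
Proof.
rewrite /doti -sumrB; apply: eq_bigr => i _; rewrite !mxE; ring.
Qed.

Definition diffs (S : seq 'rV[int]_r) : seq 'rV[R]_r :=
  flatten [seq [seq rvR R (x - y) | y <- S & y != x] | x <- S].

Lemma diffs_in S x y : x \in S -> y \in S -> y != x -> rvR R (x - y) \in diffs S.
Proof.
move=> xS yS yx; apply/flatten_mapP; exists x => //.
by apply/mapP; exists y => //; rewrite mem_filter yx.
Qed.

Lemma diffs_neq0 S h : h \in diffs S -> h != 0.
Proof.
move=> /flatten_mapP [x xS] /mapP [y]; rewrite mem_filter => /andP [yx _] ->.
by rewrite rvR_eq0 subr_eq0 eq_sym.
Qed.

Lemma exists_max (T : eqType) (s : seq T) (f : T -> int) x0 : x0 \in s ->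
  exists2 x, x \in s & forall y, y \in s -> f y <= f x.
Proof.
elim: s x0 => [//|a s IH] x0 _.
case: (boolP (s == [::])) => [/eqP ->|sn].
  by exists a; rewrite ?mem_head // => y; rewrite mem_seq1 => /eqP ->.
have [b bs] : exists b, b \in s by case: s sn {IH} => // b s _; exists b; rewrite mem_head.
have [x xs Hx] := IH b bs.
case: (leP (f a) (f x)) => h.
  exists x; first by rewrite in_cons xs orbT.
  by move=> y; rewrite in_cons => /orP [/eqP ->|]; [|apply: Hx].
exists a; first exact: mem_head.
move=> y; rewrite in_cons => /orP [/eqP ->//|ys]; apply: le_trans (Hx y ys) _.
exact: ltW.
Qed.

Lemma newton_pt (f : laurent r) e : e \in finsupp f -> newton f (rvR R e).
Proof.
move=> ef; exists (fun y => (y == e)%:R); split; [|split].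
- by move=> y; case: eqP.
- rewrite (bigD1_seq e) //= ?fset_uniq // eqxx big1 ?addr0 // => y /negbTE ->.
  by [].
- rewrite (bigD1_seq e) //= ?fset_uniq // eqxx scale1r big1 ?addr0 // => y /negbTE ->.
  by rewrite scale0r.
Qed.

Lemma newton_conv (f1 f2 : laurent r) :
  (forall e, e \in finsupp f1 -> newton f2 (rvR R e)) ->
  forall x : 'rV[R]_r, newton f1 x -> newton f2 x.
Proof.
move=> H x [w [w0 [w1 xE]]].
have gen : forall l : seq 'rV[int]_r, {subset l <= finsupp f1} ->
   exists v : 'rV[int]_r -> R, (forall y, 0 <= v y) /\
     \sum_(y <- finsupp f2) v y = \sum_(e <- l) w e /\
     \sum_(y <- finsupp f2) v y *: rvR R y = \sum_(e <- l) w e *: rvR R e.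
  elim => [|e l IH] sub.
    exists (fun _ => 0); split => //; rewrite !big_nil; split; apply: big1 => // y _.
    by rewrite scale0r.
  have [|v [v0 [v1 vE]]] := IH; first by move=> y yl; apply: sub; rewrite in_cons yl orbT.
  have [u [u0 [u1 uE]]] := H e (sub e (mem_head _ _)).
  exists (fun y => v y + w e * u y); split; [|split].
  - by move=> y; apply: addr_ge0 => //; apply: mulr_ge0.
  - by rewrite big_split /= -mulr_sumr u1 mulr1 big_cons addrC v1.
  - rewrite (eq_bigr (fun y => v y *: rvR R y + w e *: (u y *: rvR R y))); last first.
      by move=> y _; rewrite scalerDl scalerA.
    by rewrite big_split /= -scaler_sumr -uE big_cons addrC vE.
have [v [v0 [v1 vE]]] := gen (finsupp f1) (fun y yf => yf).
by exists v; split; [|split] => //; [rewrite v1 w1 | rewrite vE xE].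
Qed.

Lemma newton_bound (f : laurent r) (a : 'rV[R]_r) (N : R) x :
  (forall y, y \in finsupp f -> dot a (rvR R y) <= N) -> newton f x -> dot a x <= N.
Proof.
move=> H [w [w0 [w1 ->]]]; rewrite dot_sumr.
rewrite (eq_bigr (fun y => w y * dot a (rvR R y))); last by move=> y _; rewrite dotZr.
apply: (@le_trans _ _ (\sum_(y <- finsupp f) w y * N)).
  by apply: ler_sum_seq => y yf; apply: ler_wpM2l => //; apply: H.
by rewrite -mulr_suml w1 mul1r.
Qed.

Lemma ratio_eq (xi : R) (N : int) (g1 g2 : R) : 0 < xi ->
  (g1 / xi ^ N) / (g2 / xi ^ N) = g1 / g2.
Proof.
move=> xi0; have X0 : xi ^ N != 0 by apply: expfz_neq0; rewrite gt_eqF.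
by rewrite invf_div mulrA divfK.
Qed.

End Main.

Section Main2.
Variables (R : realType) (r : nat).

Lemma big_single (S : seq 'rV[int]_r) (P : pred 'rV[int]_r) (F : 'rV[int]_r -> R) e :
  uniq S -> e \in S -> P e -> (forall y, y \in S -> y != e -> ~~ P y) ->
  \sum_(y <- S | P y) F y = F e.
Proof.
move=> uS eS Pe H; rewrite big_mkcond (bigD1_seq e) //= Pe big1_seq ?addr0 //.
by move=> y /andP [ye yS]; rewrite (negbTE (H y yS ye)).
Qed.

Lemma gt_abs (M xi : R) : `|M| + 1 < xi -> M < xi /\ 1 < xi.
Proof. have := ler_norm M; have := normr_ge0 M; lra. Qed.

Lemma part1 (f1 f2 : laurent r) : finsupp f2 != fset0 ->
  exists K : 'rV[int]_r -> Prop, in_finite_hyperplanes R K /\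
    (Nsmall R f1 f2 -> forall s, ~ K s -> lim_finite R f1 f2 s).
Proof.
move=> /fset0Pn [y0 y0S].
exists (fun s => exists2 a, a \in diffs R (finsupp f2) & dot a (rvR R s) = 0).
split.
  exists (diffs R (finsupp f2)); split; first by move=> a; exact: diffs_neq0.
  by move=> s [a aA E]; exists a.
move=> NS s nK.
have [e2 e2S Hmax] := exists_max (fun y => doti s y) y0S.
set N := doti s e2.
have uniq2 y : y \in finsupp f2 -> y != e2 -> doti s y != N.
  move=> yS ye; apply/eqP => E; apply: nK; exists (rvR R (y - e2)).
    by apply: diffs_in => //; rewrite eq_sym.
  by rewrite dotC dot_rvR dotiBr E /N subrr.
have H1 e : e \in finsupp f1 -> doti s e <= N.
  move=> eS; rewrite -(ler_int R) -dot_rvR.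
  apply: (newton_bound (f := f2)); last exact: (NS _ (@newton_pt R _ f1 e eS)).
  by move=> y yS; rewrite dot_rvR ler_int; apply: Hmax.
have B1 := leval_bound (R := R) H1.
have B2 := leval_bound (R := R) Hmax.
have c2E : \sum_(y <- finsupp f2 | doti s y == N) (f2 y)%:~R = (f2 e2)%:~R :> R.
  apply: big_single => //; first exact: fset_uniq.
rewrite c2E in B2.
have c20 : (f2 e2)%:~R != 0 :> R by rewrite intr_eq0; move: e2S; rewrite mem_finsupp.
have [[M HM] [L HL]] := lim_ratio (G1 := fun xi => leval f1 (xipow s xi) / xi ^ N)
   (G2 := fun xi => leval f2 (xipow s xi) / xi ^ N) c20 B1 B2.
split.
  exists (`|M| + 1) => xi /gt_abs [hM _]; have := HM xi hM.
  by apply: contraNneq => ->; rewrite mul0r.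
exists L => eps eps0; have [M' HM'] := HL eps eps0.
exists (`|M'| + 1) => xi /gt_abs [hM h1].
by rewrite -(@ratio_eq _ xi N) ?HM' //; lra.
Qed.


Lemma floor_close (x : R) : `|(Num.floor x)%:~R - x| <= 1.
Proof.
have /andP [h1 h2] := floor_itv x; rewrite intrD in h2.
rewrite ler0_norm; last lra.
lra.
Qed.

Lemma part2 (f1 f2 : laurent r) (K : 'rV[int]_r -> Prop) :
  in_finite_hyperplanes R K ->
  (forall s, ~ K s -> lim_finite R f1 f2 s) -> Nsmall R f1 f2.
Proof.
move=> [A [A0 HK]] Hlim.
apply: newton_conv => e eS.
case: (separate (@rvR R r) (rvR R e) (fset_uniq (finsupp f2))) => [[w [w0 [w1 wE]]]|[a Ha]].
  by exists w.
exfalso.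
pose Nn : R := 1 + \sum_(y <- finsupp f2) \sum_i `|(rvR R (e - y)) 0 i|.
pose z : 'rV[int]_r := \row_i (Num.floor (Nn * a 0 i)).
have Hz y : y \in finsupp f2 -> 0 < doti z (e - y).
  move=> yS; rewrite -(ltr_int R) -dot_rvR.
  set v := rvR R (e - y).
  have hv : 1 <= dot a v by rewrite /v rvRB dotBr; have := Ha y yS; lra.
  have hs : \sum_i `|v 0 i| <= Nn - 1.
    rewrite /Nn addrC addKr.
    apply: (@term_le_sum _ _ _ (fun y => \sum_i `|(rvR R (e - y)) 0 i|) y) => //.
      exact: fset_uniq.
    by move=> y'; apply: sumr_ge0.
  have hs0 : 0 <= \sum_i `|v 0 i| by apply: sumr_ge0.
  have E : dot (rvR R z) v = Nn * dot a v +
      \sum_i (((Num.floor (Nn * a 0 i))%:~R - Nn * a 0 i) * v 0 i).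
    rewrite /dot mulr_sumr -big_split; apply: eq_bigr => i _.
    rewrite !mxE /=; ring.
  have hb : `|\sum_i (((Num.floor (Nn * a 0 i))%:~R - Nn * a 0 i) * v 0 i)|
      <= \sum_i `|v 0 i|.
    apply: (le_trans (ler_norm_sum _ _ _)); apply: ler_sum => i _.
    rewrite normrM -[X in _ <= X]mul1r; apply: ler_wpM2r => //.
    exact: floor_close.
  have hN : Nn <= Nn * dot a v by rewrite -[X in X <= _]mulr1; apply: ler_wpM2l => //; lra.
  rewrite E; have := ler_norm (- \sum_i (((Num.floor (Nn * a 0 i))%:~R - Nn * a 0 i) * v 0 i)).
  rewrite normrN; lra.
have HD : forall d, d \in [seq e - y | y <- finsupp f2] -> 0 < doti z d.
  by move=> d /mapP [y yS ->]; exact: Hz.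
have HH : forall h, h \in A ++ diffs R (finsupp f1) -> h != 0.
  move=> h; rewrite mem_cat => /orP [hA|hD]; [exact: A0 | exact: diffs_neq0 hD].
have [s [Hs1 Hs2]] := find_s HD HH.
have nK : ~ K s.
  move=> Ks; have [a' a'A E] := HK s Ks.
  have E' : dot a' (rvR R s) = 0 := E.
  by have := Hs2 a'; rewrite mem_cat a'A E' eqxx => /(_ isT).
have [[M HM] [L HL]] := Hlim s nK.
have [e1 e1S Hmax1] := exists_max (fun y => doti s y) eS.
set N1 := doti s e1.
have gt2 y : y \in finsupp f2 -> doti s y < N1.
  move=> yS; have := Hs1 (e - y) (map_f _ yS); rewrite dotiBr => h.
  have := Hmax1 e eS; rewrite -/N1; lia.
have uniq1 y : y \in finsupp f1 -> y != e1 -> doti s y != N1.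
  move=> yS ye; apply/eqP => Ey.
  have := Hs2 (rvR R (y - e1)); rewrite mem_cat diffs_in ?orbT //; last by rewrite eq_sym.
  by rewrite dotC dot_rvR dotiBr Ey /N1 subrr eqxx => /(_ isT).
have B1 := leval_bound (R := R) Hmax1.
have c1E : \sum_(y <- finsupp f1 | doti s y == N1) (f1 y)%:~R = (f1 e1)%:~R :> R.
  by apply: big_single => //; exact: fset_uniq.
rewrite c1E in B1.
have B2 := leval_bound (R := R) (fun y yS => ltW (gt2 y yS)).
have c2E : \sum_(y <- finsupp f2 | doti s y == N1) (f2 y)%:~R = 0 :> R.
  rewrite big_seq_cond big1 // => y /andP [yS /eqP Ey].
  by have := gt2 y yS; rewrite Ey ltxx.
rewrite c2E in B2.
have c10 : (f1 e1)%:~R != 0 :> R by rewrite intr_eq0; move: e1S; rewrite mem_finsupp.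
apply: (@blowup R (fun xi => leval f1 (xipow s xi) / xi ^ N1)
   (fun xi => leval f2 (xipow s xi) / xi ^ N1) _ _
   (\sum_(e <- finsupp f2) `|(f2 e)%:~R : R|) c10 B1).
- by move=> xi xi1; have := B2 xi xi1; rewrite subr0.
- exists (`|M| + 1) => xi /gt_abs [hM h1]; apply: mulf_neq0; first exact: HM.
  by rewrite invr_neq0 // expfz_neq0 // gt_eqF //; lra.
- exists L => eps eps0; have [M' HM'] := HL eps eps0.
  exists (`|M'| + 1) => xi /gt_abs [hM h1].
  by rewrite (@ratio_eq _ xi N1) ?HM' //; lra.
Qed.

End Main2.

Local Open Scope fset_scope.

Theorem proposition3p6 (R : realType) (r : nat) (f1 f2 : laurent r) :
  finsupp f2 != fset0 ->
  (exists K : 'rV[int]_r -> Prop,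
      in_finite_hyperplanes R K /\
      (Nsmall R f1 f2 -> forall s, ~ K s -> lim_finite R f1 f2 s)) /\
  (forall K : 'rV[int]_r -> Prop,
      in_finite_hyperplanes R K ->
      (forall s, ~ K s -> lim_finite R f1 f2 s) ->
      Nsmall R f1 f2).
Proof.
move=> h; split; first exact: (@part1 R r f1 f2 h).
by move=> K; exact: (@part2 R r f1 f2 K).
Qed.
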